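(* Let $g:\mathbb R\to\mathbb R$ be a $\chi$-integrable odd function and define $h(\omega)=\int_{\mathbb R}g(z)c(\omega,z)e^{2V(\omega)}\chi(dz)$. Then for every $\varphi\in\mathcal C$, $$(h,\varphi)_\pi=-\frac12\mathbb M\int_{\mathbb R}g(z)\big(T_z\varphi-\varphi\big)c(\cdot,z)\chi(dz).$$
   Context: $(\Omega,\mathcal G,\mu)$ is a probability space with an ergodic, jointly measurable group $\{\tau_x\}_{x\in\mathbb R}$ of measure-preserving maps; $\mathbb M$ is expectation under $\mu$; $T_x\varphi(\omega)=\varphi(\tau_x\omega)$. $\mathcal C=\mathrm{Span}\{f\star\phi:f\in L^\infty(\Omega),\phi\in C_c^\infty(\mathbb R)\}$, $f\star\phi(\omega)=\int f(\tau_x\omega)\phi(x)dx$. $\chi$ is a symmetric Lévy measure on $\mathbb R$ ($\chi(dz)=\chi(-dz)$), $c:\Omega\times\mathbb R\to[0,\infty)$ is bounded measurable with $c(\tau_z\omega,-z)=c(\omega,z)$ for $\mu$-a.e. $\omega$ and $\chi$-a.e. $z$; $V\in L^\infty(\Omega)$, normalized so that $\pi=e^{-2V}\mu$ is a probability, and $(f,g)_\pi=\mathbb M[fge^{-2V}]$. *)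

(* Defs.v *)
From HB Require Import structures.
From mathcomp Require Import all_boot all_order all_algebra.
From mathcomp Require Import all_classical all_reals all_analysis.
Set Implicit Arguments. Unset Strict Implicit. Unset Printing Implicit Defensive.
Import Order.TTheory GRing.Theory Num.Theory.
Import numFieldNormedType.Exports.
Local Open Scope classical_set_scope.
Local Open Scope ring_scope.

Section Defs.
Context (R : realType).

Definition levy_measure (chi : {measure set R -> \bar R}) : Prop :=
  chi [set 0] = 0%E /\
  (\int[chi]_z (Num.min 1 (z ^+ 2))%:E < +oo)%E.

Definition symmetric_measure (chi : {measure set R -> \bar R}) : Prop :=
  forall A : set R, measurable A -> chi [set - z | z in A] = chi A.

Definition smooth_compact (p : R -> R) : Prop :=
  (forall (n : nat) (x : R), derivable (derive1n n p) x 1) /\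
  (exists K : R, forall x : R, K < `|x| -> p x = 0).

Definition conv d (Omega : measurableType d) (tau : R -> Omega -> Omega)
  (f : Omega -> R) (p : R -> R) : Omega -> R :=
  fun w => Rintegral lebesgue_measure setT (fun x => f (tau x w) * p x).

(* bounded measurable representative of an L^infty class *)
Definition bounded_measurable d (Omega : measurableType d) (f : Omega -> R) : Prop :=
  measurable_fun setT f /\ exists M : R, forall w, `|f w| <= M.

(* the core  C = Span { f * phi : f in L^infty(Omega), phi in C_c^infty(R) } *)
Definition in_core d (Omega : measurableType d) (tau : R -> Omega -> Omega)
  (phi : Omega -> R) : Prop :=
  exists (n : nat) (a : 'I_n -> R) (f : 'I_n -> Omega -> R) (p : 'I_n -> R -> R),
    (forall i, bounded_measurable (f i)) /\
    (forall i, smooth_compact (p i)) /\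
    phi = (fun w => \sum_(i < n) a i * conv tau (f i) (p i) w).

End Defs.

(* Main.v *)
Require Import Defs.
From HB Require Import structures.
From mathcomp Require Import all_boot all_order all_algebra.
From mathcomp Require Import all_classical all_reals all_analysis.
From mathcomp Require Import measurable_realfun lebesgue_integral_fubini ring.
Set Implicit Arguments. Unset Strict Implicit. Unset Printing Implicit Defensive.
Import Order.TTheory GRing.Theory Num.Theory.
Import numFieldNormedType.Exports.
Local Open Scope classical_set_scope.
Local Open Scope ring_scope.

Lemma bnd_of d (T : measurableType d) (R : realType) (D : set T) (h : T -> R) M :
  (forall x, `|h x| <= M) -> [bounded h x | x in D].
Proof.
move=> hM; exists M; split; first exact: num_real.
by move=> x Mx y _; apply: le_trans (hM y) (ltW Mx).
Qed.

Lemma RintE d (T : measurableType d) (R : realType) (m : {measure set T -> \bar R})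
  (f : T -> R) : m.-integrable setT (EFin \o f) ->
  (Rintegral m setT f)%:E = (\int[m]_x (f x)%:E)%E.
Proof. by move=> i; rewrite /Rintegral fineK// integrable_fin_num. Qed.

Lemma RintN d (T : measurableType d) (R : realType) (m : {measure set T -> \bar R})
  (f : T -> R) : m.-integrable setT (EFin \o f) ->
  Rintegral m setT (fun x => - f x) = - Rintegral m setT f.
Proof.
move=> i; have := RintegralZl (-1) measurableT i; rewrite mulN1r => <-.
by apply: eq_Rintegral => x _; rewrite mulN1r.
Qed.

Section Inv.
Local Open Scope ereal_scope.
Context d (T : measurableType d) (R : realType) (m : {measure set T -> \bar R}).
Lemma my_integral_inv (f : T -> T) (mf : measurable_fun setT f)
  (pres : forall A, measurable A -> m (f @^-1` A) = m A)
  (h : T -> \bar R) (mh : measurable_fun setT h)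
  (ih : m.-integrable setT (h \o f)) :
  \int[m]_x h (f x) = \int[m]_x h x.
Proof.
have ih' : m.-integrable (f @^-1` setT) (h \o f) by rewrite preimage_setT.
have := integral_pushforward mf mh ih' measurableT; rewrite preimage_setT => <-.
apply: eq_measure_integral => A mA _ /=.
by rewrite /pushforward pres.
Qed.
End Inv.

Section Core.
Context (R : realType) d (Omega : measurableType d) (mu : probability Omega R)
  dT (T : measurableType dT) (chi : {sigma_finite_measure set T -> \bar R}).
Variable g : T -> R.
Hypothesis g_int : chi.-integrable setT (fun z => (g z)%:E).

Let mg : measurable_fun setT g.
Proof. by apply/measurable_EFinP; exact: measurable_int g_int. Qed.

Lemma int_chi (k : T -> R) M : measurable_fun setT k -> (forall z, `|k z| <= M) ->
  chi.-integrable setT (EFin \o (fun z => g z * k z)).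
Proof.
move=> mk kM; have := integrableMl measurableT g_int mk (bnd_of setT kM).
have -> // : ((fun z => (g z)%:E) \* (EFin \o k))%E = EFin \o (fun z => g z * k z).
by apply/funext => z; rewrite /= EFinM.
Qed.

Lemma int_mu (k : Omega -> R) M : measurable_fun setT k -> (forall z, `|k z| <= M) ->
  mu.-integrable setT (EFin \o k).
Proof.
move=> mk kM.
have := integrableMl measurableT (finite_measure_integrable_cst mu 1 measurableT) mk (bnd_of setT kM).
have -> // : ((EFin \o cst (1%R : R)) \* (EFin \o k))%E = EFin \o k.
by apply/funext => z; rewrite /= mul1e.
Qed.

Section L1.
Variables (k : Omega * T -> R) (M : R).
Hypotheses (mk : measurable_fun setT k) (kM : forall p, `|k p| <= M).

Let F := fun p : Omega * T => (g p.2 * k p)%:E.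
Let mF : measurable_fun setT F.
Proof.
apply/measurable_EFinP; apply: measurable_funM => //.
exact: measurableT_comp mg measurable_snd.
Qed.

Lemma L1a w : chi.-integrable setT (EFin \o (fun z => g z * k (w, z))).
Proof. by apply: (int_chi (M := M)) => //; exact: measurableT_comp. Qed.

Lemma L1b z : mu.-integrable setT (EFin \o (fun w => g z * k (w, z))).
Proof.
apply: (int_mu (M := `|g z| * M)).
  by apply: measurable_funM => //; exact: measurableT_comp.
by move=> w; rewrite normrM ler_wpM2l.
Qed.

Let iF : (mu \x chi)%E.-integrable setT F.
Proof.
apply/(integrable12ltyP mu chi mF).
have [_ ig] := integrableP _ _ _ g_int.
have M0 : 0 <= M by apply: le_trans (kM (point, point)).
have mabsF : measurable_fun setT (abse \o F) by exact: measurableT_comp.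
have inner x : (\int[chi]_y `|F (x, y)| <= M%:E * \int[chi]_z `|(g z)%:E|)%E.
  rewrite -ge0_integralZl//; last by apply: measurableT_comp => //; apply: measurableT_comp.
  apply: ge0_le_integral => //.
  - exact: (measurableT_comp mabsF (pair1_measurable x) : measurable_fun setT ((abse \o F) \o pair x)).
  - by apply: emeasurable_funM => //; apply: measurableT_comp => //; exact/measurable_EFinP.
  - move=> y _; rewrite /F /= -EFinM lee_fin normrM mulrC.
    by apply: ler_wpM2r => //.
apply: (@le_lt_trans _ _ (\int[mu]_x (cst (M%:E * \int[chi]_z `|(g z)%:E|)) x)%E).
  apply: ge0_le_integral => //.
  - by move=> x _; exact: integral_ge0.
  - exact: (measurable_fun_fubini_tonelli_F (m2 := chi) (abse \o F) mabsF (fun z => abse_ge0 _)).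
rewrite integral_cst//; apply: lte_mul_pinfty.
- by rewrite mule_ge0// integral_ge0.
- by rewrite fin_numM// ge0_fin_numE// integral_ge0.
- by apply: (le_lt_trans (probability_le1 mu measurableT)); exact: ltry.
Qed.

Lemma L1c : measurable_fun setT
  (fun w => (Rintegral chi setT (fun z => g z * k (w, z)))%:E).
Proof.
have -> : (fun w => (Rintegral chi setT (fun z => g z * k (w, z)))%:E) =
    fubini_F chi F.
  by apply/funext => w; rewrite /fubini_F RintE//; exact: L1a.
exact: measurable_fubini_F iF.
Qed.

Lemma L1c' : mu.-integrable setT
  (fun w => (Rintegral chi setT (fun z => g z * k (w, z)))%:E).
Proof.
have -> : (fun w => (Rintegral chi setT (fun z => g z * k (w, z)))%:E) =
    fubini_F chi F.
  by apply/funext => w; rewrite /fubini_F RintE//; exact: L1a.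
exact: integrable_fubini_F iF.
Qed.

Lemma L1d : (\int[mu]_w (Rintegral chi setT (fun z => g z * k (w, z)))%:E =
  \int[chi]_z (Rintegral mu setT (fun w => g z * k (w, z)))%:E)%E.
Proof.
have := Fubini iF; rewrite /F /=.
under eq_integral do rewrite -RintE ?L1a//.
by under [in RHS]eq_integral do rewrite -RintE ?L1b//.
Qed.
End L1.
End Core.

Section Main.
Context (R : realType) d (Omega : measurableType d) (mu : probability Omega R)
  (chi : {sigma_finite_measure set R -> \bar R}).
Variable g : R -> R.
Hypothesis g_int : chi.-integrable setT (fun z => (g z)%:E).
Variable tau : R -> Omega -> Omega.
Hypothesis tau_joint : measurable_fun setT (fun p : R * Omega => tau p.1 p.2).
Hypothesis tau_pres : forall x (A : set Omega), measurable A -> mu (tau x @^-1` A) = mu A.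
Variable c : Omega -> R -> R.
Hypothesis c_meas : measurable_fun setT (fun p : Omega * R => c p.1 p.2).
Variable Mc : R.
Hypothesis c_bd : forall w z, `|c w z| <= Mc.
Hypothesis c_sym : {ae mu, forall w, {ae chi, forall z, c (tau z w) (- z) = c w z}}.
Hypothesis chi_ref : forall A : set R, measurable A -> chi ((fun z => - z) @^-1` A) = chi A.
Hypothesis g_odd : forall z, g (- z) = - g z.
Variable phi : Omega -> R.
Hypothesis phi_meas : measurable_fun setT phi.
Variable Mp : R.
Hypothesis phi_bd : forall w, `|phi w| <= Mp.

Lemma Mp0 : 0 <= Mp. Proof. exact: le_trans (phi_bd point). Qed.

Let mtau2 : measurable_fun setT (fun p : Omega * R => tau p.2 p.1).
Proof.
exact: (measurableT_comp tau_joint (measurable_fun_pair measurable_snd measurable_fst) :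
  measurable_fun setT ((fun p : R * Omega => tau p.1 p.2) \o (fun p : Omega * R => (p.2, p.1)))).
Qed.

Let mneg2 : measurable_fun setT (fun p : Omega * R => - p.2).
Proof. exact: (measurable_funN (@measurable_snd _ _ Omega R)). Qed.

Let mtau4 : measurable_fun setT (fun p : Omega * R => tau (- p.2) p.1).
Proof.
exact: (measurableT_comp tau_joint (measurable_fun_pair mneg2 measurable_fst) :
  measurable_fun setT ((fun p : R * Omega => tau p.1 p.2) \o (fun p : Omega * R => (- p.2, p.1)))).
Qed.

Lemma kbd (a b : R) : `|a| <= Mp -> `|b| <= Mc -> `|a * b| <= Mp * Mc.
Proof. by move=> ha hb; rewrite normrM ler_pM. Qed.

Definition k1 (p : Omega * R) := phi (tau p.2 p.1) * c p.1 p.2.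
Definition k2 (p : Omega * R) := phi (tau p.2 p.1) * c (tau p.2 p.1) (- p.2).
Definition k3 (p : Omega * R) := phi p.1 * c p.1 p.2.
Definition k4 (p : Omega * R) := phi (tau (- p.2) p.1) * c (tau (- p.2) p.1) p.2.

Lemma mk1 : measurable_fun setT k1.
Proof. apply: measurable_funM => //; exact: measurableT_comp phi_meas mtau2. Qed.
Let mk2 : measurable_fun setT k2.
Proof.
apply: measurable_funM; first exact: measurableT_comp phi_meas mtau2.
exact: (measurableT_comp c_meas (measurable_fun_pair mtau2 mneg2) :
  measurable_fun setT ((fun p : Omega * R => c p.1 p.2) \o (fun p : Omega * R => (tau p.2 p.1, - p.2)))).
Qed.
Lemma mk3 : measurable_fun setT k3.
Proof. apply: measurable_funM => //; exact: measurableT_comp phi_meas measurable_fst. Qed.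
Let mk4 : measurable_fun setT k4.
Proof.
apply: measurable_funM; first exact: measurableT_comp phi_meas mtau4.
exact: (measurableT_comp c_meas (measurable_fun_pair mtau4 measurable_snd) :
  measurable_fun setT ((fun p : Omega * R => c p.1 p.2) \o (fun p : Omega * R => (tau (- p.2) p.1, p.2)))).
Qed.
Lemma bk1 p : `|k1 p| <= Mp * Mc. Proof. exact: kbd. Qed.
Let bk2 p : `|k2 p| <= Mp * Mc. Proof. exact: kbd. Qed.
Lemma bk3 p : `|k3 p| <= Mp * Mc. Proof. exact: kbd. Qed.
Let bk4 p : `|k4 p| <= Mp * Mc. Proof. exact: kbd. Qed.

Lemma core :
 (\int[mu]_w (Rintegral chi setT (fun z => g z * k1 (w, z)))%:E =
  - \int[mu]_w (Rintegral chi setT (fun z => g z * k3 (w, z)))%:E)%E.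
Proof.
have step1 : (\int[mu]_w (Rintegral chi setT (fun z => g z * k1 (w, z)))%:E =
    \int[mu]_w (Rintegral chi setT (fun z => g z * k2 (w, z)))%:E)%E.
  apply: ae_eq_integral => //; [exact: (L1c mu g_int mk1 bk1)|exact: (L1c mu g_int mk2 bk2)|].
  apply: filterS c_sym => w Hw _; congr (_%:E); congr fine.
  apply: ae_eq_integral => //.
  - exact: measurable_int (L1a g_int mk1 bk1 w).
  - exact: measurable_int (L1a g_int mk2 bk2 w).
  - by apply: filterS Hw => z Hz _; rewrite /k1 /k2 /= Hz.
have step2 w : Rintegral chi setT (fun z => g z * k2 (w, z)) =
    - Rintegral chi setT (fun z => g z * k4 (w, z)).
  rewrite -RintN; last exact: (L1a g_int mk4 bk4 w).
  have mh : measurable_fun setT (EFin \o (fun z => g z * k2 (w, z))).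
    exact: measurable_int (L1a g_int mk2 bk2 w).
  have E : (EFin \o (fun z => g z * k2 (w, z))) \o (fun z => - z) =
      EFin \o (fun z => g z * - k4 (w, z)).
    apply/funext => z; rewrite /= /k2 /k4 /= g_odd opprK.
    by congr (_%:E); rewrite mulNr mulrN.
  have ih : chi.-integrable setT ((EFin \o (fun z => g z * k2 (w, z))) \o (fun z => - z)).
    rewrite E; apply: (int_chi g_int (M := Mp * Mc)).
      by apply: measurableT_comp; [exact: oppr_measurable|exact: measurableT_comp mk4 _].
    by move=> z; rewrite normrN.
  have mneg : measurable_fun (setT : set R) (fun z : R => - z) by exact: oppr_measurable.
  have H := my_integral_inv mneg chi_ref mh ih.
  rewrite /Rintegral; congr fine; apply: eq_trans (esym H) _.
  apply: eq_integral => z _; rewrite /= /k2 /k4 /= g_odd opprK.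
  by rewrite mulNr.
rewrite step1.
under eq_integral => w _ do rewrite step2 EFinN.
rewrite integralN; last exact: integrable_add_def (L1c' mu g_int mk4 bk4).
congr (- _)%E.
rewrite (L1d mu g_int mk4 bk4) (L1d mu g_int mk3 bk3).
apply: eq_integral => z _; congr (_%:E); congr fine.
have mtz : measurable_fun setT (tau (- z)).
  exact: (measurableT_comp tau_joint (pair1_measurable (- z)) :
    measurable_fun setT ((fun p : R * Omega => tau p.1 p.2) \o pair (- z))).
have mh : measurable_fun setT (EFin \o (fun w => g z * k3 (w, z))).
  exact: measurable_int (L1b mu g mk3 bk3 z).
exact: (my_integral_inv mtz (tau_pres (- z)) mh (L1b mu g mk4 bk4 z)).
Qed.
End Main.

Lemma sc_cont (R : realType) (p : R -> R) : smooth_compact p -> continuous p.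
Proof.
case=> hd _ x; have := hd 0%N x; rewrite derive1n0 => /derivable1_diffP.
exact: differentiable_continuous.
Qed.

Lemma sc_int (R : realType) (p : R -> R) : smooth_compact p ->
  (@lebesgue_measure R).-integrable setT (EFin \o p).
Proof.
move=> sp; have cp := sc_cont sp; case: sp => _ [K HK].
pose A := `[- `|K|, `|K|]%classic.
have iA : (@lebesgue_measure R).-integrable A (EFin \o p).
  apply: continuous_compact_integrable; first exact: segment_compact.
  exact: continuous_subspaceT.
apply/integrableP; split.
  by apply/measurable_EFinP; apply: continuous_measurable_fun.
have [_ fA] := integrableP _ _ _ iA.
rewrite (_ : (fun x => `|(EFin \o p) x|)%E = ((fun x => `|(EFin \o p) x|) \_ A)%E).
  by rewrite -integral_mkcond.
apply/funext => x; rewrite /patch; case: ifPn => // /negP xA.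
rewrite /= HK ?normr0 //.
rewrite ltNge; apply/negP => hx; apply: xA.
apply/mem_set; rewrite /A /=. by rewrite in_itv /= -ler_norml (le_trans hx (ler_norm K)).
Qed.

Section Conv.
Context (R : realType) d (Omega : measurableType d) (mu : probability Omega R)
  (tau : R -> Omega -> Omega)
  (tau_joint : measurable_fun setT (fun p : R * Omega => tau p.1 p.2)).

Lemma conv_ok (f : Omega -> R) (p : R -> R) :
  bounded_measurable f -> smooth_compact p ->
  measurable_fun setT (Defs.conv tau f p) /\ exists B, forall w, `|Defs.conv tau f p w| <= B.
Proof.
move=> [mf [Mf hf]] sp.
have ip := sc_int sp.
pose k (q : Omega * R) := f (tau q.2 q.1).
have mk : measurable_fun setT k.
  apply: measurableT_comp mf _.
  exact: (measurableT_comp tau_joint (measurable_fun_pair measurable_snd measurable_fst) :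
    measurable_fun setT ((fun p : R * Omega => tau p.1 p.2) \o (fun p : Omega * R => (p.2, p.1)))).
have hk q : `|k q| <= Mf by exact: hf.
have E : Defs.conv tau f p = fun w => Rintegral lebesgue_measure setT (fun z => p z * k (w, z)).
  by apply/funext => w; rewrite /Defs.conv; apply: eq_Rintegral => z _; rewrite mulrC.
rewrite E; split.
  apply/measurable_EFinP.
  exact: (L1c mu ip mk hk).
have [_ fp] := integrableP _ _ _ ip.
have C0 : (0 <= \int[lebesgue_measure]_x `|(EFin \o p) x|)%E by exact: integral_ge0.
exists (Mf * fine (\int[lebesgue_measure]_x `|(EFin \o p) x|)) => w.
have iw := L1a ip mk hk w.
rewrite -lee_fin EFin_normr_Rintegral// EFinM fineK; last by rewrite ge0_fin_numE.
apply: le_trans (le_abse_integral _ _ _) _ => //.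
  exact: measurable_int iw.
rewrite -ge0_integralZl//; last first.
- have M0 : 0 <= Mf by apply: le_trans (hf point).
  by rewrite lee_fin.
- by apply: measurableT_comp => //; exact: measurable_int ip.
apply: ge0_le_integral => //.
- by apply: measurableT_comp => //; exact: measurable_int iw.
- have M0 : 0 <= Mf by apply: le_trans (hf point).
  apply: emeasurable_funM => //; apply: measurableT_comp => //.
  exact: measurable_int ip.
- move=> z _; rewrite /= -EFinM lee_fin normrM mulrC.
  by apply: ler_wpM2r => //; exact: hf.
Qed.

Lemma core_phi (phi : Omega -> R) : in_core tau phi ->
  measurable_fun setT phi /\ exists Mp, forall w, `|phi w| <= Mp.
Proof.
move=> [n [a [f [p [hf [hp ->]]]]]].
have H i := conv_ok (hf i) (hp i).
have [B HB] := @choice 'I_n R (fun i Bi => forall w, `|Defs.conv tau (f i) (p i) w| <= Bi) (fun i => (H i).2).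
split.
  apply: measurable_sum => i; apply: measurable_funM => //; exact: (H i).1.
exists (\sum_(i < n) `|a i| * B i) => w.
apply: le_trans (ler_norm_sum _ _ _) _.
apply: ler_sum => i _; rewrite normrM; apply: ler_wpM2l => //.
Qed.
End Conv.

Lemma levy_sf (R : realType) (chi : {measure set R -> \bar R}) :
  levy_measure chi -> sigma_finite setT chi.
Proof.
move=> [chi0 hint].
pose B (n : nat) := [set z : R | (n.+1%:R)^-1 <= `|z|].
have mB n : measurable (B n).
  have := @normr_measurable R setT measurableT _ (measurable_itv `[(n.+1%:R)^-1, +oo[).
  rewrite setTI; congr measurable; apply/seteqP; split => z /=;
    by rewrite in_itv /= andbT.
exists (fun n => [set 0] `|` B n).
  apply/seteqP; split => // z _.
  have [->|z0] := eqVneq z 0; first by exists 0%N => //; left.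
  exists (Num.truncn (`|z|^-1)) => //; right; rewrite /B /=.
  have zp : 0 < `|z| by rewrite normr_gt0.
  rewrite -[X in _ <= X](invrK `|z|) lef_pV2 ?posrE ?invr_gt0//.
  exact/ltW/truncnS_gt.
move=> n; split; first exact: measurableU.
apply: (le_lt_trans (measureU2 _ _ _)) => //.
have h0 : (chi [set (0%R : R)] < +oo)%E by rewrite chi0 ltry.
apply: lte_add_pinfty; first exact: h0.

pose e := (n.+1%:R : R)^-1.
have e0 : 0 < e by rewrite invr_gt0.
have e1 : e <= 1 by rewrite invf_le1 // ler1n.
have mm : measurable_fun setT (fun z : R => (Num.min 1 (z ^+ 2))%:E).
  apply/measurable_EFinP; apply: measurable_minr => //; exact: exprn_measurable.
have H : ((e ^+ 2)%:E * chi (B n) <= \int[chi]_z (Num.min 1 (z ^+ 2))%:E)%E.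
  rewrite -(setIT (B n)) -integral_indic// -ge0_integralZl//; last 2 first.
  - by apply: measurableT_comp => //; exact: measurable_indic.
  - by rewrite lee_fin exprn_ge0// ltW.
  apply: ge0_le_integral => //.
  - move=> z _; rewrite -EFinM lee_fin; apply: mulr_ge0.
      by rewrite exprn_ge0// ltW.
    by rewrite /indic; case: (z \in B n).
  - apply: emeasurable_funM => //; apply: measurableT_comp => //.
  - move=> z _; rewrite -EFinM lee_fin /indic; case: (boolP (z \in B n)) => zB /=; last first.
      by rewrite mulr0 le_min ler01 sqr_ge0.
    rewrite mulr1 le_min; apply/andP; split.
      by rewrite expr_le1 // ltW.
    have ez : e <= `|z| by move: zB; rewrite inE.
    by rewrite -(real_normK (num_real z)) ler_sqr ?nnegrE ?normr_ge0 // ltW.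
have H2 := le_lt_trans H hint.
have hB : (chi (B n) < +oo)%E.
  rewrite ltNge leye_eq; apply/negP => /eqP h; move: H2.
  by rewrite h gt0_muley ?ltxx// lte_fin exprn_gt0.
exact: hB.
Qed.

Section SF.
Context (R : realType) (chi : {measure set R -> \bar R}) (H : sigma_finite setT chi).
Definition chisf (_ : sigma_finite setT chi) : set R -> \bar R := chi.
HB.instance Definition _ := Measure.on (chisf H).
HB.instance Definition _ := @Measure_isSigmaFinite.Build _ _ _ (chisf H) H.
End SF.

Lemma main_gen (R : realType) (d : measure_display)
  (Omega : measurableType d) (mu : probability Omega R)
  (tau : R -> Omega -> Omega)
  (tau_pres : forall x (A : set Omega), measurable A -> mu (tau x @^-1` A) = mu A)
  (tau_joint : measurable_fun setT (fun p : R * Omega => tau p.1 p.2))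
  (chi : {sigma_finite_measure set R -> \bar R})
  (chi_sym : symmetric_measure chi)
  (c : Omega -> R -> R)
  (c_meas : measurable_fun setT (fun p : Omega * R => c p.1 p.2))
  (c_ge0 : forall w z, 0 <= c w z)
  (c_bdd : exists M : R, forall w z, c w z <= M)
  (c_sym : {ae mu, forall w, {ae chi, forall z, c (tau z w) (- z) = c w z}})
  (V : Omega -> R)
  (g : R -> R)
  (g_int : chi.-integrable setT (fun z => (g z)%:E))
  (g_odd : forall z, g (- z) = - g z)
  (phi : Omega -> R) (phi_core : in_core tau phi) :
  let h := fun w => Rintegral chi setT (fun z => g z * c w z * expR (2 * V w)) in
  (\int[mu]_w (h w * phi w * expR (- 2 * V w))%:E =
   (- (1 / 2))%:E *
   \int[mu]_w (Rintegral chi setT (fun z => g z * (phi (tau z w) - phi w) * c w z))%:E)%E.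
Proof.
move=> h.
have [mphi [Mp hphi]] := core_phi mu tau_joint phi_core.
have [M hM] := c_bdd.
have c_bd w z : `|c w z| <= M by rewrite ger0_norm.
have chi_ref (A : set R) : measurable A -> chi ((fun z => - z) @^-1` A) = chi A.
  move=> mA; rewrite -(chi_sym A mA); congr (chi _); apply/seteqP; split => z /=.
    by move=> Az; exists (- z) => //; rewrite opprK.
  by move=> [x Ax <-]; rewrite opprK.
have C := core g_int tau_joint tau_pres c_meas c_bd c_sym chi_ref g_odd mphi hphi.
have m1 := mk1 tau_joint c_meas mphi.
have m3 := mk3 c_meas mphi.
have b1 : forall p, `|k1 tau c phi p| <= Mp * M by move=> p; exact: bk1.
have b3 : forall p, `|k3 c phi p| <= Mp * M by move=> p; exact: bk3.
have i1 w := L1a g_int m1 b1 w.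
have i3 w := L1a g_int m3 b3 w.
have I1 := L1c' mu g_int m1 b1.
have I3 := L1c' mu g_int m3 b3.
have LHSe w : h w * phi w * expR (- 2 * V w) =
    Rintegral chi setT (fun z => g z * k3 c phi (w, z)).
  have mcw : measurable_fun setT (c w).
    exact: (measurableT_comp c_meas (pair1_measurable w) :
      measurable_fun setT ((fun p : Omega * R => c p.1 p.2) \o pair w)).
  have ic := int_chi g_int mcw (c_bd w).
  rewrite /h /k3 /= RintegralZr //.
  rewrite [in RHS](@eq_Rintegral _ _ _ chi setT (fun z => phi w * (g z * c w z))); last first.
    by move=> z _; rewrite mulrCA.
  rewrite RintegralZl //.
  have EE : expR (2 * V w) * expR (- 2 * V w) = 1.
    by rewrite -expRD mulNr addrN expR0.
  transitivity (Rintegral chi setT (fun z => g z * c w z) *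
    (expR (2 * V w) * expR (- 2 * V w)) * phi w); first by ring.
  by rewrite EE mulr1 mulrC.
have RHSe w : Rintegral chi setT (fun z => g z * (phi (tau z w) - phi w) * c w z) =
    Rintegral chi setT (fun z => g z * k1 tau c phi (w, z)) -
    Rintegral chi setT (fun z => g z * k3 c phi (w, z)).
  rewrite -RintegralB //; apply: eq_Rintegral => z _; rewrite /k1 /k3 /=; ring.
under eq_integral => w _ do rewrite LHSe.
under [in RHS]eq_integral => w _ do rewrite RHSe EFinB.
rewrite integralB_EFin //.
rewrite C.
have [a Ha] : exists a, (\int[mu]_w (Rintegral chi setT (fun z => g z * k3 c phi (w, z)))%:E)%E = a%:E.
  by exists (fine (\int[mu]_w (Rintegral chi setT (fun z => g z * k3 c phi (w, z)))%:E)%E); rewrite fineK// integrable_fin_num.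
rewrite Ha -EFinN -EFinB -EFinM; congr (_%:E).
by field.
Qed.

Theorem mainTheorem14 (R : realType) (d : measure_display)
  (Omega : measurableType d) (mu : probability Omega R)
  (tau : R -> Omega -> Omega)
  (* group of measure-preserving maps *)
  (tau0 : forall w, tau 0 w = w)
  (tauD : forall x y w, tau (x + y) w = tau x (tau y w))
  (tau_meas : forall x, measurable_fun setT (tau x))
  (tau_pres : forall x (A : set Omega), measurable A -> mu (tau x @^-1` A) = mu A)
  (* jointly measurable *)
  (tau_joint : measurable_fun setT (fun p : R * Omega => tau p.1 p.2))
  (* ergodic *)
  (tau_erg : forall A : set Omega, measurable A ->
     (forall x, tau x @^-1` A = A) -> mu A = 0%E \/ mu A = 1%E)
  (chi : {measure set R -> \bar R})
  (chi_levy : levy_measure chi) (chi_sym : symmetric_measure chi)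
  (c : Omega -> R -> R)
  (c_meas : measurable_fun setT (fun p : Omega * R => c p.1 p.2))
  (c_ge0 : forall w z, 0 <= c w z)
  (c_bdd : exists M : R, forall w z, c w z <= M)
  (c_sym : {ae mu, forall w, {ae chi, forall z, c (tau z w) (- z) = c w z}})
  (V : Omega -> R)
  (V_meas : measurable_fun setT V)
  (V_bdd : exists M : R, {ae mu, forall w, `|V w| <= M})
  (V_norm : (\int[mu]_w (expR (- 2 * V w))%:E = 1)%E)
  (g : R -> R)
  (g_int : chi.-integrable setT (fun z => (g z)%:E))
  (g_odd : forall z, g (- z) = - g z)
  (phi : Omega -> R) (phi_core : in_core tau phi) :
  let h := fun w => Rintegral chi setT (fun z => g z * c w z * expR (2 * V w)) in
  (\int[mu]_w (h w * phi w * expR (- 2 * V w))%:E =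
   (- (1 / 2))%:E *
   \int[mu]_w (Rintegral chi setT (fun z => g z * (phi (tau z w) - phi w) * c w z))%:E)%E.
Proof.
have sfc := levy_sf chi_levy.
exact: (main_gen (chi := chisf sfc) tau_pres tau_joint chi_sym c_meas c_ge0 c_bdd c_sym V g_int g_odd phi_core).
Qed.
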